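(* If $\otimes=\min$ and $\oplus$ is any uninorm on $[0,1]$, then $(\otimes,\oplus)$ satisfies the rearrangement inequality and the dual rearrangement inequality. If $\oplus=\max$ and $\otimes$ is any uninorm on $[0,1]$, then $(\otimes,\oplus)$ satisfies the rearrangement inequality and the dual rearrangement inequality.
   Context: A uninorm is a function $\otimes:[0,1]^2\to[0,1]$ that is commutative, associative, monotonic ($x\leq y$ implies $x\otimes z\leq y\otimes z$), and has an identity element $e\in[0,1]$ ($\min$ and $\max$ are uninorms). $(\otimes,\oplus)$ satisfies the rearrangement inequality if for every $n\geq1$, all $0\leq x_1\leq\cdots\leq x_n\leq 1$, $0\leq y_1\leq\cdots\leq y_n\leq 1$ and every permutation $\sigma$ of $\{1,\dots,n\}$, $$(x_n\otimes y_1)\oplus\cdots\oplus(x_1\otimes y_n)\leq (x_{\sigma(1)}\otimes y_1)\oplus\cdots\oplus(x_{\sigma(n)}\otimes y_n)\leq (x_1\otimes y_1)\oplus\cdots\oplus(x_n\otimes y_n),$$ and the dual rearrangement inequality if for all such data $$(x_n\oplus y_1)\otimes\cdots\otimes(x_1\oplus y_n)\geq (x_{\sigma(1)}\oplus y_1)\otimes\cdots\otimes(x_{\sigma(n)}\oplus y_n)\geq (x_1\oplus y_1)\otimes\cdots\otimes(x_n\oplus y_n).$$ *)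

(* Defs.v *)
From Stdlib Require Import Reals.
Open Scope R_scope.

Definition I01 (x : R) : Prop := 0 <= x <= 1.

Definition uninorm (u : R -> R -> R) : Prop :=
  (forall x y, I01 x -> I01 y -> I01 (u x y)) /\
  (forall x y, I01 x -> I01 y -> u x y = u y x) /\
  (forall x y z, I01 x -> I01 y -> I01 z -> u x (u y z) = u (u x y) z) /\
  (forall x y z, I01 x -> I01 y -> I01 z -> x <= y -> u x z <= u y z) /\
  (exists e, I01 e /\ forall x, I01 x -> u e x = x).

(* Iterated operation over the terms f 0, ..., f (n-1), n >= 1:
   iter_op op f n = (...((f 0 op f 1) op f 2) ...) op f (n-1).
   For n = 0 the value is f 0 (never used: the statement requires n >= 1). *)
Fixpoint iter_op_aux (op : R -> R -> R) (f : nat -> R) (k : nat) : R :=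
  match k with
  | O => f O
  | S k' => op (iter_op_aux op f k') (f k)
  end.

Definition iter_op (op : R -> R -> R) (f : nat -> R) (n : nat) : R :=
  iter_op_aux op f (pred n).

(* sigma is a permutation of {0, ..., n-1} (indices shifted by one
   compared with the paper's {1, ..., n}). *)
Definition is_perm (n : nat) (sigma : nat -> nat) : Prop :=
  (forall i, (i < n)%nat -> (sigma i < n)%nat) /\
  (forall i j, (i < n)%nat -> (j < n)%nat -> sigma i = sigma j -> i = j).

Definition sorted01 (n : nat) (x : nat -> R) : Prop :=
  (forall i, (i < n)%nat -> I01 (x i)) /\
  (forall i j, (i <= j)%nat -> (j < n)%nat -> x i <= x j).

Definition rearrangement (otimes oplus : R -> R -> R) : Prop :=
  forall (n : nat) (x y : nat -> R) (sigma : nat -> nat),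
    (1 <= n)%nat -> sorted01 n x -> sorted01 n y -> is_perm n sigma ->
    iter_op oplus (fun i => otimes (x (n - 1 - i)%nat) (y i)) n
      <= iter_op oplus (fun i => otimes (x (sigma i)) (y i)) n /\
    iter_op oplus (fun i => otimes (x (sigma i)) (y i)) n
      <= iter_op oplus (fun i => otimes (x i) (y i)) n.

Definition dual_rearrangement (otimes oplus : R -> R -> R) : Prop :=
  forall (n : nat) (x y : nat -> R) (sigma : nat -> nat),
    (1 <= n)%nat -> sorted01 n x -> sorted01 n y -> is_perm n sigma ->
    iter_op otimes (fun i => oplus (x (n - 1 - i)%nat) (y i)) n
      >= iter_op otimes (fun i => oplus (x (sigma i)) (y i)) n /\
    iter_op otimes (fun i => oplus (x (sigma i)) (y i)) n
      >= iter_op otimes (fun i => oplus (x i) (y i)) n.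

(* Main.v *)
Require Import Defs.
From Stdlib Require Import Reals Lra Lia FinFun.
Open Scope R_scope.

Definition UN (U : R -> R -> R) (e : R) : Prop :=
  (forall x y, I01 x -> I01 y -> I01 (U x y)) /\
  (forall x y, I01 x -> I01 y -> U x y = U y x) /\
  (forall x y z, I01 x -> I01 y -> I01 z -> U x (U y z) = U (U x y) z) /\
  I01 e /\ (forall x, I01 x -> U e x = x).

Fixpoint G (U : R -> R -> R) (e : R) (f : nat -> R) (n : nat) : R :=
  match n with O => e | S m => U (G U e f m) (f m) end.

Lemma G_iter U e f n : UN U e -> I01 (f O) -> (1 <= n)%nat -> iter_op U f n = G U e f n.
Proof.
  intros (Hc & Hcm & Ha & He & Hid) H0 Hn.
  unfold iter_op. destruct n as [|m]; [lia|]. simpl pred. clear Hn.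
  induction m as [|m IH].
  - simpl. now rewrite Hid.
  - change (U (iter_op_aux U f m) (f (S m)) = U (G U e f (S m)) (f (S m))).
    now rewrite IH.
Qed.

Lemma G_ext U e f f' n : (forall i, (i < n)%nat -> f i = f' i) -> G U e f n = G U e f' n.
Proof.
  induction n; intros H; simpl; auto.
  rewrite IHn by (intros; apply H; lia). rewrite H by lia. auto.
Qed.

Lemma G_I01 U e f n : UN U e -> (forall i, (i < n)%nat -> I01 (f i)) -> I01 (G U e f n).
Proof.
  intros HU; pose proof HU as (Hc & Hcm & Ha & He & Hid).
  induction n; intros H; simpl; auto.
  apply Hc; auto; apply IHn; intros; apply H; lia.
Qed.

Lemma G_mono U e (rel : R -> R -> Prop) f f' n : UN U e ->
  (forall a, rel a a) ->
  (forall a b c, I01 a -> I01 b -> I01 c -> rel a b -> rel (U a c) (U b c)) ->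
  (forall a b c, rel a b -> rel b c -> rel a c) ->
  (forall i, (i < n)%nat -> I01 (f i) /\ I01 (f' i) /\ rel (f i) (f' i)) ->
  rel (G U e f n) (G U e f' n).
Proof.
  intros HU Hr Hm Ht. pose proof HU as (Hc & Hcm & Ha & He & Hid).
  induction n; intros H; simpl; auto.
  assert (Hi : forall i, (i < n)%nat -> I01 (f i) /\ I01 (f' i) /\ rel (f i) (f' i))
    by (intros; apply H; lia).
  destruct (H n) as (A & B & C); [lia|].
  assert (I1 : I01 (G U e f n)) by (apply G_I01; auto; intros; apply Hi; auto).
  assert (I2 : I01 (G U e f' n)) by (apply G_I01; auto; intros; apply Hi; auto).
  apply Ht with (U (G U e f' n) (f n)).
  - apply Hm; auto.
  - rewrite (Hcm _ (f n)), (Hcm _ (f' n)) by auto. apply Hm; auto.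
Qed.

Definition upd (e : R) (f : nat -> R) (k : nat) : nat -> R :=
  fun i => if Nat.eqb i k then e else f i.

Lemma G_pick U e f n k : UN U e -> (forall i, (i < n)%nat -> I01 (f i)) -> (k < n)%nat ->
  G U e f n = U (f k) (G U e (upd e f k) n).
Proof.
  intros HU. pose proof HU as (Hc & Hcm & Ha & He & Hid).
  induction n; intros H Hk; [lia|].
  assert (Hi : forall i, (i < n)%nat -> I01 (f i)) by (intros; apply H; lia).
  assert (Hu : forall i, (i < n)%nat -> I01 (upd e f k i))
    by (intros i Hin; unfold upd; destruct (Nat.eqb i k); auto).
  simpl. destruct (Nat.eq_dec k n) as [->|Hne].
  - unfold upd at 2. rewrite Nat.eqb_refl.
    rewrite (G_ext U e (upd e f n) f n).
    2:{ intros i Hin. unfold upd. destruct (Nat.eqb_spec i n); [lia|auto]. }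
    assert (I1 : I01 (G U e f n)) by (apply G_I01; auto).
    rewrite (Hcm _ e) by auto. rewrite Hid by auto. apply Hcm; auto.
  - rewrite IHn by (auto; lia).
    unfold upd at 3. destruct (Nat.eqb_spec n k); [lia|].
    assert (I1 : I01 (G U e (upd e f k) n)) by (apply G_I01; auto).
    rewrite Ha; auto.
Qed.

Lemma G_two U e (rel : R -> R -> Prop) f f' n k : UN U e ->
  (forall a, rel a a) ->
  (forall a b c, I01 a -> I01 b -> I01 c -> rel a b -> rel (U a c) (U b c)) ->
  (forall i, (i <= n)%nat -> I01 (f i) /\ I01 (f' i)) ->
  (forall i, (i < n)%nat -> i <> k -> f i = f' i) -> (k < n)%nat ->
  rel (U (f k) (f n)) (U (f' k) (f' n)) ->
  rel (G U e f (S n)) (G U e f' (S n)).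
Proof.
  intros HU Hr Hm H01 Hag Hk Hkey. pose proof HU as (Hc & Hcm & Ha & He & Hid).
  simpl.
  assert (A : forall i, (i < n)%nat -> I01 (f i)) by (intros; apply H01; lia).
  assert (A' : forall i, (i < n)%nat -> I01 (f' i)) by (intros; apply H01; lia).
  rewrite (G_pick U e f n k), (G_pick U e f' n k) by auto.
  rewrite (G_ext U e (upd e f' k) (upd e f k) n).
  2:{ intros i Hin. unfold upd. destruct (Nat.eqb_spec i k); auto. symmetry; auto. }
  set (H := G U e (upd e f k) n).
  assert (IH : I01 H).
  { apply G_I01; auto. intros i Hin; unfold upd; destruct (Nat.eqb i k); auto. }
  destruct (H01 k) as [B B']; [lia|]. destruct (H01 n) as [C C']; [lia|].
  rewrite (Hcm (f k) H), (Hcm (f' k) H) by auto.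
  rewrite <- !Ha by auto.
  rewrite (Hcm H (U (f k) (f n))), (Hcm H (U (f' k) (f' n))) by auto.
  apply Hm; auto.
Qed.

Lemma perm_surj n s : is_perm n s -> forall j, (j < n)%nat -> exists k, (k < n)%nat /\ s k = j.
Proof. intros [Hb Hi]. apply bInjective_bSurjective; auto. Qed.




Lemma upper U e g (rel : R -> R -> Prop) : UN U e ->
  (forall a, rel a a) ->
  (forall a b c, I01 a -> I01 b -> I01 c -> rel a b -> rel (U a c) (U b c)) ->
  (forall a b c, rel a b -> rel b c -> rel a c) ->
  (forall a c, I01 a -> I01 c -> I01 (g a c)) ->
  (forall a b c d, I01 a -> I01 b -> I01 c -> I01 d -> a <= b -> c <= d ->
     rel (U (g b c) (g a d)) (U (g a c) (g b d))) ->
  forall n x y s, sorted01 n x -> sorted01 n y -> is_perm n s ->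
  rel (G U e (fun i => g (x (s i)) (y i)) n) (G U e (fun i => g (x i) (y i)) n).
Proof.
  intros HU Hr Hm Ht Hg Hkey. pose proof HU as (Hc & Hcm & Ha & He & Hid).
  induction n as [|n IH]; intros x y s [Hx0 Hx] [Hy0 Hy] Hs.
  { simpl; auto. }
  destruct (perm_surj _ _ Hs n) as (k & Hk & Hsk); [lia|].
  destruct Hs as [Hsb Hsi].
  set (s' := fun i => if Nat.eqb i k then s n else if Nat.eqb i n then n else s i).
  assert (Hsn : (s n < S n)%nat) by (apply Hsb; lia).
  assert (Step1 : rel (G U e (fun i => g (x (s i)) (y i)) (S n))
                      (G U e (fun i => g (x (s' i)) (y i)) (S n))).
  { destruct (Nat.eq_dec k n) as [->|Hkn].
    - rewrite (G_ext U e _ (fun i => g (x (s' i)) (y i))); [apply Hr|].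
      intros i Hi. unfold s'. destruct (Nat.eqb_spec i n); subst; auto.
    - apply (G_two U e rel _ _ n k); auto; try lia.
      + intros i Hi. split; apply Hg; try apply Hy0; try lia; apply Hx0.
        * apply Hsb; lia.
        * unfold s'. destruct (Nat.eqb_spec i k); [lia|].
          destruct (Nat.eqb_spec i n); [lia|]. apply Hsb; lia.
      + intros i Hi Hik. unfold s'. destruct (Nat.eqb_spec i k); [lia|].
        destruct (Nat.eqb_spec i n); [lia|]. auto.
      + unfold s'. rewrite Nat.eqb_refl. destruct (Nat.eqb_spec n k); [lia|].
        rewrite Nat.eqb_refl, Hsk.
        apply Hkey; try apply Hx0; try apply Hy0; try lia.
        * apply Hx; lia.
        * apply Hy; lia. }
  assert (Hp : is_perm n s').
  { split.
    - intros i Hi. unfold s'. destruct (Nat.eqb_spec i k).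
      + destruct (Nat.eq_dec (s n) n); [|lia]. exfalso.
        assert (n = k) by (apply Hsi; lia). lia.
      + destruct (Nat.eqb_spec i n); [lia|].
        assert (s i < S n)%nat by (apply Hsb; lia).
        destruct (Nat.eq_dec (s i) n); [|lia]. exfalso.
        assert (i = k) by (apply Hsi; lia). lia.
    - intros i j Hi Hj. unfold s'.
      destruct (Nat.eqb_spec i k); destruct (Nat.eqb_spec j k); try lia;
      destruct (Nat.eqb_spec i n); destruct (Nat.eqb_spec j n); try lia; intro E.
      + assert (n = j) by (apply Hsi; lia). lia.
      + assert (i = n) by (apply Hsi; lia). lia.
      + apply Hsi; lia. }
  assert (Hxs : sorted01 n x) by (split; intros; [apply Hx0|apply Hx]; lia).
  assert (Hys : sorted01 n y) by (split; intros; [apply Hy0|apply Hy]; lia).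
  specialize (IH x y s' Hxs Hys Hp).
  apply Ht with (1 := Step1). simpl.
  assert (Hs'n : s' n = n).
  { unfold s'. destruct (Nat.eqb_spec n k); subst; auto. now rewrite Nat.eqb_refl. }
  rewrite Hs'n.
  apply Hm; [| | |exact IH].
  - apply G_I01; [exact HU|]; intros i Hi. apply Hg; [apply Hx0|apply Hy0; lia].
    assert (s' i < n)%nat by (apply Hp; auto). lia.
  - apply G_I01; [exact HU|]; intros i Hi. apply Hg; [apply Hx0|apply Hy0]; lia.
  - apply Hg; [apply Hx0|apply Hy0]; lia.
Qed.

Lemma lower U e g (rel : R -> R -> Prop) : UN U e ->
  (forall a, rel a a) ->
  (forall a b c, I01 a -> I01 b -> I01 c -> rel a b -> rel (U a c) (U b c)) ->
  (forall a b c, rel a b -> rel b c -> rel a c) ->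
  (forall a c, I01 a -> I01 c -> I01 (g a c)) ->
  (forall a b c d, I01 a -> I01 b -> I01 c -> I01 d -> a <= b -> c <= d ->
     rel (U (g b c) (g a d)) (U (g a c) (g b d))) ->
  forall n x y s, sorted01 n x -> sorted01 n y -> is_perm n s ->
  rel (G U e (fun i => g (x (n - 1 - i)%nat) (y i)) n) (G U e (fun i => g (x (s i)) (y i)) n).
Proof.
  intros HU Hr Hm Ht Hg Hkey. pose proof HU as (Hc & Hcm & Ha & He & Hid).
  induction n as [|n IH]; intros x y s [Hx0 Hx] [Hy0 Hy] Hs.
  { simpl; auto. }
  destruct (perm_surj _ _ Hs 0%nat) as (k & Hk & Hsk); [lia|].
  destruct Hs as [Hsb Hsi].
  set (s' := fun i => if Nat.eqb i k then s n else if Nat.eqb i n then 0%nat else s i).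
  assert (Hsn : (s n < S n)%nat) by (apply Hsb; lia).
  assert (Step1 : rel (G U e (fun i => g (x (s' i)) (y i)) (S n))
                      (G U e (fun i => g (x (s i)) (y i)) (S n))).
  { destruct (Nat.eq_dec k n) as [->|Hkn].
    - rewrite (G_ext U e (fun i => g (x (s' i)) (y i)) (fun i => g (x (s i)) (y i))); [apply Hr|].
      intros i Hi. unfold s'. destruct (Nat.eqb_spec i n); subst; auto.
    - apply (G_two U e rel _ _ n k); auto; try lia.
      + intros i Hi. split; apply Hg; try apply Hy0; try lia; apply Hx0.
        * unfold s'. destruct (Nat.eqb_spec i k); [lia|].
          destruct (Nat.eqb_spec i n); [lia|]. apply Hsb; lia.
        * apply Hsb; lia.
      + intros i Hi Hik. unfold s'. destruct (Nat.eqb_spec i k); [lia|].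
        destruct (Nat.eqb_spec i n); [lia|]. auto.
      + unfold s'. rewrite Nat.eqb_refl. destruct (Nat.eqb_spec n k); [lia|].
        rewrite Nat.eqb_refl, Hsk.
        apply Hkey; try apply Hx0; try apply Hy0; try lia.
        * apply Hx; lia.
        * apply Hy; lia. }
  assert (Hpos : forall i, (i < n)%nat -> (1 <= s' i <= n)%nat).
  { intros i Hi. unfold s'. destruct (Nat.eqb_spec i k).
    - destruct (Nat.eq_dec (s n) 0); [|lia]. exfalso.
      assert (n = k) by (apply Hsi; lia). lia.
    - destruct (Nat.eqb_spec i n); [lia|].
      assert (s i < S n)%nat by (apply Hsb; lia).
      destruct (Nat.eq_dec (s i) 0); [|lia]. exfalso.
      assert (i = k) by (apply Hsi; lia). lia. }
  set (s'' := fun i => (s' i - 1)%nat).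
  assert (Hp : is_perm n s'').
  { split.
    - intros i Hi. unfold s''. specialize (Hpos i Hi). lia.
    - intros i j Hi Hj E. unfold s'' in E.
      pose proof (Hpos i Hi). pose proof (Hpos j Hj).
      assert (E' : s' i = s' j) by lia. clear E. revert E'. unfold s'.
      destruct (Nat.eqb_spec i k); destruct (Nat.eqb_spec j k); try lia;
      destruct (Nat.eqb_spec i n); destruct (Nat.eqb_spec j n); try lia; intro E.
      + assert (n = j) by (apply Hsi; lia). lia.
      + assert (i = n) by (apply Hsi; lia). lia.
      + apply Hsi; lia. }
  set (x'' := fun i => x (S i)).
  assert (Hxs : sorted01 n x'').
  { split; intros; unfold x''; [apply Hx0|apply Hx]; lia. }
  assert (Hys : sorted01 n y) by (split; intros; [apply Hy0|apply Hy]; lia).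
  specialize (IH x'' y s'' Hxs Hys Hp).
  refine (Ht _ _ _ _ Step1). cbn [G].
  assert (Hs'n : s' n = 0%nat).
  { unfold s'. destruct (Nat.eqb_spec n k); subst; auto. now rewrite Nat.eqb_refl. }
  rewrite Hs'n. replace (S n - 1 - n)%nat with 0%nat by lia.
  rewrite (G_ext U e (fun i => g (x (S n - 1 - i)%nat) (y i)) (fun i => g (x'' (n - 1 - i)%nat) (y i))).
  2:{ intros i Hi. unfold x''. do 2 f_equal. lia. }
  rewrite (G_ext U e (fun i => g (x (s' i)) (y i)) (fun i => g (x'' (s'' i)) (y i))).
  2:{ intros i Hi. unfold x'', s''. specialize (Hpos i Hi). do 2 f_equal. lia. }
  apply Hm; [| | |exact IH].
  - apply G_I01; [exact HU|]; intros i Hi. unfold x''. apply Hg; [apply Hx0|apply Hy0]; lia.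
  - apply G_I01; [exact HU|]; intros i Hi. unfold x''. apply Hg; [apply Hx0|apply Hy0; lia].
    assert (s'' i < n)%nat by (apply Hp; auto). lia.
  - apply Hg; [apply Hx0|apply Hy0]; lia.
Qed.

Lemma assemble U e g (rel : R -> R -> Prop) : UN U e ->
  (forall a, rel a a) ->
  (forall a b c, I01 a -> I01 b -> I01 c -> rel a b -> rel (U a c) (U b c)) ->
  (forall a b c, rel a b -> rel b c -> rel a c) ->
  (forall a c, I01 a -> I01 c -> I01 (g a c)) ->
  (forall a b c d, I01 a -> I01 b -> I01 c -> I01 d -> a <= b -> c <= d ->
     rel (U (g b c) (g a d)) (U (g a c) (g b d))) ->
  forall n x y s, (1 <= n)%nat -> sorted01 n x -> sorted01 n y -> is_perm n s ->
  rel (iter_op U (fun i => g (x (n - 1 - i)%nat) (y i)) n) (iter_op U (fun i => g (x (s i)) (y i)) n) /\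
  rel (iter_op U (fun i => g (x (s i)) (y i)) n) (iter_op U (fun i => g (x i) (y i)) n).
Proof.
  intros HU Hr Hm Ht Hg Hkey n x y s Hn Hx Hy Hs.
  pose proof Hx as [Hx0 _]. pose proof Hy as [Hy0 _]. pose proof Hs as [Hsb _].
  assert (HI : forall f : nat -> nat, (f 0 < n)%nat -> I01 (g (x (f 0%nat)) (y 0%nat))).
  { intros f Hf. apply Hg; [apply Hx0|apply Hy0]; lia. }
  rewrite (G_iter U e _ n HU (HI (fun i => (n - 1 - i)%nat) ltac:(cbv beta; lia)) Hn).
  rewrite (G_iter U e _ n HU (HI s (Hsb 0%nat ltac:(cbv beta; lia))) Hn).
  rewrite (G_iter U e _ n HU (HI (fun i => i) ltac:(cbv beta; lia)) Hn).
  split.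
  - apply (lower U e g rel); auto.
  - apply (upper U e g rel); auto.
Qed.

Ltac mm := unfold Rmin, Rmax, I01 in *; repeat destruct Rle_dec; lra.

Lemma UN_of U : uninorm U -> exists e, UN U e /\
   (forall x y z, I01 x -> I01 y -> I01 z -> x <= y -> U x z <= U y z).
Proof.
  intros (Hc & Hcm & Ha & Hm & e & He & Hid). exists e. exact (conj (conj Hc (conj Hcm (conj Ha (conj He Hid)))) Hm).
Qed.

Lemma UN_min : UN Rmin 1.
Proof. repeat split; intros; mm. Qed.
Lemma UN_max : UN Rmax 0.
Proof. repeat split; intros; mm. Qed.

Lemma dom1 U : (forall x y, I01 x -> I01 y -> U x y = U y x) ->
  (forall x y z, I01 x -> I01 y -> I01 z -> x <= y -> U x z <= U y z) ->
  forall p q r s, I01 p -> I01 q -> I01 r -> I01 s ->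
  r = Rmin p q -> Rmax p q <= s -> U p q <= U r s.
Proof.
  intros Hcm Hm p q r s Hp Hq Hr Hs E M.
  destruct (Rle_dec p q).
  - assert (EE : r = p) by mm. rewrite EE.
    rewrite (Hcm p q), (Hcm p s) by auto. apply Hm; auto. mm.
  - assert (EE : r = q) by mm. rewrite EE.
    rewrite (Hcm q s) by auto. apply Hm; auto. mm.
Qed.

Lemma dom2 U : (forall x y, I01 x -> I01 y -> U x y = U y x) ->
  (forall x y z, I01 x -> I01 y -> I01 z -> x <= y -> U x z <= U y z) ->
  forall p q r s, I01 p -> I01 q -> I01 r -> I01 s ->
  s = Rmax p q -> r <= Rmin p q -> U r s <= U p q.
Proof.
  intros Hcm Hm p q r s Hp Hq Hr Hs E M.
  destruct (Rle_dec p q).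
  - assert (EE : s = q) by mm. rewrite EE. apply Hm; auto. mm.
  - assert (EE : s = p) by mm. rewrite EE.
    rewrite (Hcm p q) by auto. apply Hm; auto. mm.
Qed.

Theorem theorem10 :
  (forall oplus : R -> R -> R, uninorm oplus ->
     rearrangement Rmin oplus /\ dual_rearrangement Rmin oplus) /\
  (forall otimes : R -> R -> R, uninorm otimes ->
     rearrangement otimes Rmax /\ dual_rearrangement otimes Rmax).
Proof.
  split; intros U HU; destruct (UN_of U HU) as (e & HUN & Hm);
    pose proof HUN as (Hc & Hcm & Ha & He & Hid); split;
    intros n x y s Hn Hx Hy Hs.
  - apply (assemble U e Rmin Rle); auto; try (intros; lra); try (intros; mm).
    intros a b c d Ia Ib Ic Id Hab Hcd.
    apply dom1; auto; try (unfold I01 in *; mm).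
  - apply (assemble Rmin 1 U Rge); auto using UN_min; try (intros; lra); try (intros; mm).
    intros a b c d Ia Ib Ic Id Hab Hcd.
    assert (U a c <= U b c) by (apply Hm; auto).
    assert (U a c <= U a d) by (rewrite (Hcm a c), (Hcm a d) by auto; apply Hm; auto).
    mm.
  - apply (assemble Rmax 0 U Rle); auto using UN_max; try (intros; lra); try (intros; mm).
    intros a b c d Ia Ib Ic Id Hab Hcd.
    assert (U b c <= U b d) by (rewrite (Hcm b c), (Hcm b d) by auto; apply Hm; auto).
    assert (U a d <= U b d) by (apply Hm; auto).
    mm.
  - apply (assemble U e Rmax Rge); auto; try (intros; lra); try (intros; mm).
    + intros a b c Ia Ib Ic H. apply Rle_ge, Hm; auto. lra.
    + intros a b c d Ia Ib Ic Id Hab Hcd.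
      apply Rle_ge, dom2; auto; try (unfold I01 in *; mm).
Qed.
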